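(* Let $n,m\ge1$ and identify $n$-bit strings with elements of $\mathbb{F}_{2^n}$, with addition $\oplus$ (bitwise XOR) and field multiplication $*$; for a bit $d$ and $b\in\mathbb{F}_{2^n}$ let $d\cdot b$ be $0$ if $d=0$ and $b$ if $d=1$. Let $B_1,\dots,B_m$ be independent uniformly random elements of $\mathbb{F}_{2^n}$ (honest Bob's challenges), and let $R_A$ be a random variable on a finite set, independent of $(B_1,\dots,B_m)$. A classical cheating strategy of Alice is a collection of deterministic functions with values in $\mathbb{F}_{2^n}$ giving her messages $Y_1=f_1(R_A,B_1)$; for $2\le k\le m$, $Y_k^{(d)}=f_k(R_A,B_1,\dots,B_{k-2},B_k,d)$; and $Y_{m+1}^{(d)}=f_{m+1}(R_A,B_1,\dots,B_{m-1},d)$, where $d\in\{0,1\}$ is the bit she attempts to unveil. Let $H_d$ be the event $$Y^{(d)}_{m+1}=\bigoplus_{j=1}^{m}\Big(\prod_{i=j+1}^{m}B_i\Big)*Y^{(d)}_j\ \oplus\ d\cdot\prod_{i=1}^{m}B_i,$$ where $Y^{(d)}_1:=Y_1$, products are taken with $*$ and the empty product is $1$, and let $p_d=\Pr[H_d]$. Then for every such strategy, $p_0+p_1\le1+\omega_m$, where $\omega_m$ is the optimal winning probability of the $m$-player multiplication game over $\mathbb{F}_{2^n}$ defined below; i.e. the $(m+1)$-round protocol is $\varepsilon$-binding with $\varepsilon=\omega_m$.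
   Context: Multiplication game: for $r\ge1$ and a finite field $\mathbb{F}_q$, inputs $X_1,\dots,X_r$ are independent uniform on $\mathbb{F}_q$; player $k$ sees all inputs except $X_k$ and outputs $f_k(X_{[r]\setminus\{k\}})$ for some function $f_k:\mathbb{F}_q^{r-1}\to\mathbb{F}_q$; the game is won iff $\prod_{k=1}^rX_k=\sum_{k=1}^rf_k(X_{[r]\setminus\{k\}})$; $\omega_r$ is the maximum winning probability over all choices of $f_1,\dots,f_r$. The protocol: Alice's agents share uniform secrets $a_1,\dots,a_m$; in round 1 Bob sends $b_1$ and Alice returns $y_1=d\cdot b_1\oplus a_1$; in rounds $2\le k\le m$ Bob sends $b_k$ and Alice returns $y_k=(b_k*a_{k-1})\oplus a_k$; in round $m+1$ Alice sends $d$ and $y_{m+1}=a_m$; Bob accepts iff the relation defining $H_d$ holds. Consecutive rounds are space-like separated, so Alice's round-$k$ message cannot depend on $b_{k-1}$, and her round-1 message cannot depend on $d$; this is what the dependencies of the $f_k$ encode. $\varepsilon$-binding means $p_0+p_1\le1+\varepsilon$ for all cheating strategies. *)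

(* Defs.v *)
From mathcomp Require Import all_boot all_order all_algebra all_field.
Set Implicit Arguments. Unset Strict Implicit. Unset Printing Implicit Defensive.
Import Order.TTheory GRing.Theory Num.Theory.
Local Open Scope ring_scope.

(* Inputs x : {ffun 'I_r -> F}; player k's view is x with coordinate k erased
   (set to 0), so a function of the view is exactly a function of X_{[r]\{k}}. *)
Definition game_view (F : finFieldType) (r : nat) (k : 'I_r)
    (x : {ffun 'I_r -> F}) : {ffun 'I_r -> F} :=
  [ffun j => if j == k then 0 else x j].

Definition game_strategy (F : finFieldType) (r : nat) : finType :=
  {ffun 'I_r -> {ffun {ffun 'I_r -> F} -> F}}.

Definition game_wins (F : finFieldType) (r : nat) (f : game_strategy F r) : nat :=
  #|[set x : {ffun 'I_r -> F} |
      \prod_(k < r) x k == \sum_(k < r) f k (game_view k x)]|.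

Definition omega (R : realFieldType) (F : finFieldType) (r : nat) : R :=
  (\max_(f : game_strategy F r) game_wins f)%:R / (#|F| ^ r)%:R.

(* Rounds are indexed 0-based by k : 'I_m.+1 (k = 0 is round 1, k = m is round
   m+1); challenges B_1..B_m are b : {ffun 'I_m -> F} (0-based).  The message of
   round k+1 may depend on B_j (0-based j) iff j.+1 < k or j = k:
     round 1        : B_1
     round k+1 (2..m): B_1..B_{k-1}, B_{k+1}
     round m+1      : B_1..B_{m-1}.                                          *)
Definition visible (m : nat) (k : 'I_m.+1) (j : 'I_m) : bool :=
  (j.+1 < k)%N || (nat_of_ord j == nat_of_ord k).

Definition mask (F : finFieldType) (m : nat) (k : 'I_m.+1)
    (b : {ffun 'I_m -> F}) : {ffun 'I_m -> F} :=
  [ffun j => if visible k j then b j else 0].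

Definition alice_strategy (F : finFieldType) (RA : finType) (m : nat) :=
  'I_m.+1 -> RA -> {ffun 'I_m -> F} -> bool -> F.

(* Y_{k+1}^{(d)}; round-1 message does not depend on d. *)
Definition msg (F : finFieldType) (RA : finType) (m : nat)
    (f : alice_strategy F RA m) (k : 'I_m.+1) (d : bool) (r : RA)
    (b : {ffun 'I_m -> F}) : F :=
  f k r (mask k b) (if nat_of_ord k == 0%N then false else d).

Definition Hd (F : finFieldType) (RA : finType) (m : nat)
    (f : alice_strategy F RA m) (d : bool) (r : RA) (b : {ffun 'I_m -> F}) : bool :=
  msg f ord_max d r b ==
    \sum_(j < m) (\prod_(i < m | (j < i)%N) b i) * msg f (widen_ord (leqnSn m) j) d r b
    + (if d then \prod_(i < m) b i else 0).

(* p_d = Pr[H_d], with R_A ~ P independent of B uniform on F^m *)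
Definition prob_Hd (R : realFieldType) (F : finFieldType) (RA : finType) (m : nat)
    (P : {ffun RA -> R}) (f : alice_strategy F RA m) (d : bool) : R :=
  \sum_(r : RA) P r *
     ((#|[set b : {ffun 'I_m -> F} | Hd f d r b]|)%:R / (#|F| ^ m)%:R).

(* Main.v *)
Require Import Defs.
From mathcomp Require Import all_boot all_order all_algebra all_field.
Import Order.TTheory GRing.Theory Num.Theory.
Local Open Scope ring_scope.

Section Alg.
Variables (F : finFieldType) (RA : finType) (m' : nat).
Local Notation M := m'.+1.
Variables (f : alice_strategy F RA M) (r : RA).

Definition Dk (k : 'I_M.+1) (b : {ffun 'I_M -> F}) : F :=
  msg f k true r b - msg f k false r b.

Definition gstrat : game_strategy F M :=
  [ffun k : 'I_M => [ffun v : {ffun 'I_M -> F} =>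
     if (k < m')%N then - (\prod_(i < M | (k.+1 < i)%N) v i) * Dk (inord k.+1) v
     else Dk ord_max v]].

Lemma msg_view (k : 'I_M.+1) (p : 'I_M) d x :
  ~~ visible k p -> msg f k d r (game_view p x) = msg f k d r x.
Proof.
move=> nv; rewrite /msg; congr (f _ _ _ _); apply/ffunP=> j; rewrite !ffunE.
case: eqP => [->|_]; first by rewrite (negbTE nv).
by case: visible.
Qed.

Lemma Dk_view (k : 'I_M.+1) (p : 'I_M) x :
  ~~ visible k p -> Dk k (game_view p x) = Dk k x.
Proof. by move=> nv; rewrite /Dk !msg_view. Qed.

Lemma key (b : {ffun 'I_M -> F}) :
  Hd f false r b -> Hd f true r b ->
  \prod_(k < M) b k == \sum_(k < M) gstrat k (game_view k b).
Proof.
rewrite /Hd => /eqP H0 /eqP H1.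
have HD : Dk ord_max b = \sum_(j < M) (\prod_(i < M | (j < i)%N) b i) *
     Dk (widen_ord (leqnSn M) j) b + \prod_(i < M) b i.
  rewrite /Dk H0 H1 addr0 addrAC; congr (_ + _).
  by rewrite -sumrB; apply: eq_bigr => j _; rewrite mulrBr.
apply/eqP; rewrite [RHS]big_ord_recr /= /gstrat ffunE ffunE /= ltnn Dk_view; last first.
  by rewrite /visible /= ltnn eqn_leq ltnn andbF.
rewrite HD addrA -[LHS]add0r; congr (_ + _); apply/esym.
rewrite [X in _ + X]big_ord_recl.
have -> : Dk (widen_ord (leqnSn M) ord0) b = 0 by rewrite /Dk /msg /= subrr.
rewrite mulr0 add0r -big_split big1 // => k _.
have wk : nat_of_ord (widen_ord (leqnSn m') k) = k by [].
rewrite ffunE ffunE lift0 wk ltn_ord.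
have -> : widen_ord (leqnSn M) (lift ord0 k) = inord k.+1.
  apply: val_inj; rewrite /= inordK; first exact: lift0.
  by rewrite !ltnS ltnW.
rewrite Dk_view; last first.
  rewrite /visible /= inordK ?ltnn; last by rewrite !ltnS ltnW.
  by rewrite (ltn_eqF (ltnSn k)).
rewrite /= mulNr addrC; apply/eqP; rewrite subr_eq0; apply/eqP; congr (_ * _).
apply: eq_bigr => i Hi; rewrite ffunE.
case: eqP => // Hik; move: Hi; rewrite Hik /= ltnNge => /negP; case.
exact: leqW.
Qed.

Lemma per_r : (#|[set b : {ffun 'I_M -> F} | Hd f false r b]| +
   #|[set b : {ffun 'I_M -> F} | Hd f true r b]| <=
   #|F| ^ M + \max_(g : game_strategy F M) game_wins g)%N.
Proof.
rewrite -cardsUI leq_add //.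
  by rewrite (leq_trans (max_card _)) // card_ffun card_ord.
apply: (@leq_trans (game_wins gstrat)); last first.
  by apply: (@leq_bigmax (game_strategy F M) (fun g => game_wins g)).
rewrite /game_wins.
apply: subset_leq_card; apply/subsetP => b; rewrite !inE => /andP[h0 h1].
exact: key.
Qed.
End Alg.

Theorem propositionC2 (R : realFieldType) (F : finFieldType) (n m : nat)
  (RA : finType) (P : {ffun RA -> R}) (f : alice_strategy F RA m) :
  (1 <= n)%N -> (1 <= m)%N -> #|F| = (2 ^ n)%N ->
  (forall r, 0 <= P r) -> \sum_(r : RA) P r = 1 ->
  prob_Hd P f false + prob_Hd P f true <= 1 + omega R F m.
Proof.
case: m f => [|m'] f // _ _ _ HP HS.
have Npos : (0 < #|F| ^ m'.+1)%N by rewrite expn_gt0 (cardD1 0).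
have N0 : ((#|F| ^ m'.+1)%:R : R) != 0 by rewrite pnatr_eq0 -lt0n.
have -> : 1 + omega R F m'.+1 = \sum_r P r * (1 + omega R F m'.+1).
  by rewrite -big_distrl /= HS mul1r.
rewrite /prob_Hd -big_split /=.
apply: ler_sum => r _; rewrite -mulrDr ler_wpM2l //.
rewrite -mulrDl -natrD.
have -> : 1 + omega R F m'.+1 = (#|F| ^ m'.+1 +
    \max_(g : game_strategy F m'.+1) game_wins g)%:R / (#|F| ^ m'.+1)%:R.
  by rewrite natrD mulrDl divff.
rewrite ler_pM2r ?invr_gt0 ?ltr0n // ler_nat.
exact: per_r.
Qed.
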